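(* Let $G=(V,E)$ be a connected graph with $n$ vertices, $\tau$ a set of types, $f:\tau\to\mathbb{Q}_{\ge1}$ a fitness function, $\alpha\in\tau^+(f)$, and $D\in\mathcal D(G,\tau)$. Then $\pi_\alpha(G,\tau,f,D)\ge 1/n$.
   Context: $\tau^+(f)=\{i\in\tau: f(i)=\max_{j\in\tau}f(j)\}$. For $G=(V,E)$, $N(v)$ is the neighbourhood of $v$. $\Omega$ is the set of functions $V\to\tau$; for $S\in\Omega$, $S|_{v\to w}$ equals $S$ except $w$ gets type $S(v)$. The Moran process $M(G,\tau,f,M_0)$: Markov chain on $\Omega$ from $M_0$; given $M_t$, choose $v$ with probability $f(M_t(v))/\sum_uf(M_t(u))$, then $w\in N(v)$ uniformly, set $M_{t+1}=M_t|_{v\to w}$. $\pi_j(G,\tau,f,M_0)$ is the probability that eventually all vertices have type $j$, and $\pi_j(G,\tau,f,D)=\sum_{M_0}\Pr_D(M_0)\pi_j(G,\tau,f,M_0)$. With $k=|\tau|$, $V[k]$ is the set of $k$-tuples of distinct vertices, $\tau[k]$ the set of $k$-tuples of distinct types, $\Omega(\mathbf u,\boldsymbol\gamma)$ the set of states mapping the $i$-th entry of $\mathbf u$ to the $i$-th entry of $\boldsymbol\gamma$ for all $i$. $\mathcal D(G,\tau)$ is the set of distributions $D$ on $\Omega$ for which there are distributions $D_{\mathbf u,\boldsymbol\gamma}$ on $\Omega(\mathbf u,\boldsymbol\gamma)$ with $\Pr_D(S)=\frac{1}{|V[k]\times\tau[k]|}\sum_{(\mathbf u,\boldsymbol\gamma)\in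 V[k]\times\tau[k]}\Pr_{D_{\mathbf u,\boldsymbol\gamma}}(S)$ for all $S$. *)

(* Defs.v *)
From HB Require Import structures.
From mathcomp Require Import all_boot all_order all_algebra.
From mathcomp Require Import all_classical all_reals all_analysis.
Set Implicit Arguments. Unset Strict Implicit. Unset Printing Implicit Defensive.
Import Order.TTheory GRing.Theory Num.Theory.
Import numFieldNormedType.Exports.
Local Open Scope ring_scope.

Section Moran.
Variables (R : realType) (V T : finType) (adj : rel V) (f : T -> rat).

Definition state := {ffun V -> T}.

Definition nbhd (v : V) : {set V} := [set w | adj v w].

Definition upd (S : state) (v w : V) : state :=
  [ffun x => if x == w then S v else S x].

Definition total_fit (S : state) : R := \sum_(u : V) ratr (f (S u)).

(* one-step transition probability of the Moran process.
   (If N(v) is empty -- only possible for a one-vertex connected graph --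
   the convention is that the state does not change.) *)
Definition trans (S S' : state) : R :=
  \sum_(v : V)
    (ratr (f (S v)) / total_fit S) *
    (if #|nbhd v| == 0%N then (S' == S)%:R
     else \sum_(w in nbhd v) (#|nbhd v|%:R)^-1 * (S' == upd S v w)%:R).

Fixpoint law (M0 : state) (t : nat) : state -> R :=
  match t with
  | 0%N => fun S => (S == M0)%:R
  | t'.+1 => fun S' => \sum_(S : state) law M0 t' S * trans S S'
  end.

Definition mono (j : T) : state := [ffun _ => j].

(* Since mono j is absorbing, the event "eventually all j" is the increasing
   union over t of {M_t = mono j}, so its probability is the limit. *)
Definition fix_prob (j : T) (M0 : state) : R :=
  limn (fun t => law M0 t (mono j)).

Definition fix_prob_D (j : T) (D : state -> R) : R :=
  \sum_(M0 : state) D M0 * fix_prob j M0.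

End Moran.

Definition is_distr (R : realType) (X : finType) (P : X -> R) : Prop :=
  (forall x, 0 <= P x) /\ \sum_(x : X) P x = 1.

Definition fittest (T : finType) (f : T -> rat) : {set T} :=
  [set i | [forall j, f j <= f i]].

Definition states_with (V T : finType) (k : nat) (u : k.-tuple V)
  (g : k.-tuple T) : {set state V T} :=
  [set S : state V T | [forall i : 'I_k, S (tnth u i) == tnth g i]].

(* the class D(G, tau) of initial distributions, k = |tau|;
   V[k] = uniq k-tuples of vertices, tau[k] = uniq k-tuples of types *)
Definition good_init (R : realType) (V T : finType) (D : state V T -> R) : Prop :=
  is_distr D /\
  exists Du : #|T|.-tuple V -> #|T|.-tuple T -> state V T -> R,
    (forall (u : #|T|.-tuple V) (g : #|T|.-tuple T), uniq u -> uniq g ->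
        is_distr (Du u g) /\
        (forall S, S \notin states_with u g -> Du u g S = 0)) /\
    (forall S, D S =
       (#|[set u : #|T|.-tuple V | uniq u]|%:R
        * #|[set g : #|T|.-tuple T | uniq g]|%:R)^-1
       * \sum_(u : #|T|.-tuple V | uniq u) \sum_(g : #|T|.-tuple T | uniq g)
           Du u g S).

Definition connected_graph (V : finType) (adj : rel V) : Prop :=
  symmetric adj /\ irreflexive adj /\ (forall x y, connect adj x y).

(* Main.v *)
Require Import Defs.
From HB Require Import structures.
From mathcomp Require Import all_boot all_order all_algebra.
From mathcomp Require Import all_classical all_reals all_analysis.
From mathcomp Require Import ring lra.
Import Order.TTheory GRing.Theory Num.Theory.
Import numFieldNormedType.Exports.
Local Open Scope ring_scope.
Set Implicit Arguments. Unset Strict Implicit. Unset Printing Implicit Defensive.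

Section Main.
Variables (R : realType) (V T : finType) (adj : rel V) (f : T -> rat).
Hypothesis Hf : forall i, 1 <= f i.
Variable v0 : V.
Hypothesis adj_sym : symmetric adj.
Hypothesis adj_con : forall x y, connect adj x y.
Variable alpha : T.
Hypothesis Ha : forall j, f j <= f alpha.

Local Notation st := (state V T).
Local Notation F := (@total_fit R V T f).
Local Notation deg v := (#|nbhd adj v|).
Lemma sum_indic (g : st -> R) (Y : st) :
  \sum_(S : st) (S == Y)%:R * g S = g Y.
Proof.
rewrite (bigD1 Y) //= eqxx mul1r big1 ?addr0 // => S /negbTE ->.
by rewrite mul0r.
Qed.

Lemma sum_indic' (g : st -> R) (Y : st) :
  \sum_(S : st) g S * (S == Y)%:R = g Y.
Proof. by under eq_bigr do rewrite mulrC; exact: sum_indic. Qed.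

Lemma ratr_f_ge1 i : 1 <= ratr (f i) :> R.
Proof. by rewrite -(rmorph1 (@ratr R)) ler_rat Hf. Qed.

Lemma ratr_f_gt0 i : 0 < ratr (f i) :> R.
Proof. exact: lt_le_trans ltr01 (ratr_f_ge1 i). Qed.

Lemma F_gt0 (S : st) : 0 < F S.
Proof.
rewrite /total_fit (bigD1 v0) //=.
apply: lt_le_trans (ratr_f_gt0 (S v0)) _.
rewrite lerDl sumr_ge0 // => i _; exact: ltW (ratr_f_gt0 _).
Qed.

Lemma sum_p (S : st) : \sum_(v : V) ratr (f (S v)) / F S = 1.
Proof. by rewrite -mulr_suml divff // gt_eqF // F_gt0. Qed.

Lemma p_ge0 (S : st) v : 0 <= ratr (f (S v)) / F S :> R.
Proof. by rewrite divr_ge0 // ltW // ?F_gt0 ?ratr_f_gt0. Qed.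

Lemma step_exp (S : st) (g : st -> R) :
  \sum_(S' : st) trans R adj f S S' * g S' =
  \sum_(v : V) (ratr (f (S v)) / F S) *
    (if deg v == 0%N then g S
     else \sum_(w in nbhd adj v) (deg v)%:R^-1 * g (upd S v w)).
Proof.
rewrite /trans.
under eq_bigr do rewrite mulr_suml.
rewrite exchange_big; apply: eq_bigr => v _.
under eq_bigr => i _ do rewrite -(mulrA (_ / _)).
rewrite -(mulr_sumr _ _ _ (ratr (f (S v)) / F S)); congr (_ * _).
case: ifP => _; first exact: sum_indic.
under eq_bigr do rewrite mulr_suml.
rewrite exchange_big; apply: eq_bigr => w _.
under eq_bigr do rewrite -mulrA.
by rewrite -mulr_sumr sum_indic.
Qed.

Lemma trans_ge0 (S S' : st) : 0 <= trans R adj f S S'.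
Proof.
rewrite /trans sumr_ge0 // => v _; rewrite mulr_ge0 ?p_ge0 //.
case: ifP => _; first exact: ler0n.
rewrite sumr_ge0 // => w _; by rewrite mulr_ge0 ?invr_ge0 ?ler0n.
Qed.

Lemma trans_sum1 (S : st) : \sum_(S' : st) trans R adj f S S' = 1.
Proof.
have := step_exp S (fun _ => 1).
under eq_bigr do rewrite mulr1.
move=> ->.
rewrite -[RHS](sum_p S); apply: eq_bigr => v _.
case: ifP => [_|/negbT d0]; first by rewrite mulr1.
under eq_bigr do rewrite mulr1.
by rewrite sumr_const -(mulr_natr (#|nbhd adj v|%:R^-1)) mulVf ?mulr1 // pnatr_eq0.
Qed.

Lemma law_ge0 (M0 : st) t (S : st) : 0 <= law R adj f M0 t S.
Proof.
elim: t S => [|t IH] S /=; first exact: ler0n.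
by rewrite sumr_ge0 // => S0 _; rewrite mulr_ge0 ?trans_ge0.
Qed.

Lemma law_sum1 (M0 : st) t : \sum_(S : st) law R adj f M0 t S = 1.
Proof.
elim: t => [|t IH] /=.
  by rewrite (bigD1 M0) //= eqxx big1 ?addr0 // => S /negbTE ->.
rewrite exchange_big -[RHS]IH; apply: eq_bigr => S _.
by rewrite -mulr_sumr trans_sum1 mulr1.
Qed.

Lemma law_exp (M0 : st) t (g : st -> R) :
  \sum_(S' : st) law R adj f M0 t.+1 S' * g S' =
  \sum_(S : st) law R adj f M0 t S * (\sum_(S' : st) trans R adj f S S' * g S').
Proof.
rewrite /=. under eq_bigr do rewrite mulr_suml.
rewrite exchange_big; apply: eq_bigr => S _.
by rewrite mulr_sumr; apply: eq_bigr => S' _; rewrite mulrA.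
Qed.

Lemma CK (M0 : st) t s (X : st) :
  law R adj f M0 (t + s) X = \sum_(S : st) law R adj f M0 t S * law R adj f S s X.
Proof.
elim: s X => [|s IH] X.
  rewrite addn0 /=. under eq_bigr do rewrite mulrC.
  by rewrite (bigD1 X) //= eqxx mul1r big1 ?addr0 // => S /negbTE; rewrite eq_sym => ->; rewrite mul0r.
rewrite addnS /=. under eq_bigr do rewrite IH mulr_suml.
rewrite exchange_big; apply: eq_bigr => S _.
by rewrite mulr_sumr; apply: eq_bigr => Y _; rewrite mulrA.
Qed.

Lemma law1 (M0 S : st) : law R adj f M0 1 S = trans R adj f M0 S.
Proof.
rewrite /=. under eq_bigr do rewrite mulrC.
by rewrite (bigD1 M0) //= eqxx mulr1 big1 ?addr0 // => S0 /negbTE ->; rewrite mulr0.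
Qed.

Definition ww (v : V) : R := ((maxn 1 (deg v))%:R)^-1.
Definition XX (S : st) : R := \sum_(v : V) (S v == alpha)%:R * ww v.
Definition I (S : st) v : R := (S v == alpha)%:R.

Lemma ww_ge0 v : 0 <= ww v.
Proof. by rewrite invr_ge0 ler0n. Qed.

Lemma ww_gt0 v : 0 < ww v.
Proof. by rewrite invr_gt0 ltr0n leq_max. Qed.

Lemma ww_adj v w : adj v w -> ww v = (deg v)%:R^-1.
Proof.
move=> avw; rewrite /ww; congr (_%:R^-1); apply/maxn_idPr.
by rewrite card_gt0; apply/set0Pn; exists w; rewrite inE.
Qed.

Lemma XX_upd (S : st) v w :
  XX (upd S v w) = XX S + (I S v - I S w) * ww w.
Proof.
rewrite /XX (bigD1 w) //= [in RHS](bigD1 w) //= /upd ffunE eqxx.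
have -> : \sum_(i | i != w) (([ffun x => if x == w then S v else S x] : st) i == alpha)%:R * ww i
   = \sum_(i | i != w) (S i == alpha)%:R * ww i.
  by apply: eq_bigr => i /negbTE iw; rewrite ffunE iw.
rewrite /I; set a := \sum_(i | _) _; rewrite mulrBl; ring.
Qed.

Lemma inner_eq (S : st) v :
  (if deg v == 0%N then XX S
   else \sum_(w in nbhd adj v) (deg v)%:R^-1 * XX (upd S v w))
  = XX S + \sum_(w in nbhd adj v) (deg v)%:R^-1 * ((I S v - I S w) * ww w).
Proof.
case: ifP => [/eqP d0|/negbT d0].
  by rewrite (cards0_eq d0) big_set0 addr0.
under eq_bigr do rewrite XX_upd mulrDr.
rewrite big_split /= -mulr_sumr sumr_const.
by rewrite -(mulr_natr (XX S)) mulrCA mulVf ?mulr1 // pnatr_eq0.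
Qed.

Lemma pair_ge0 (S : st) v w :
  0 <= (ratr (f (S v)) - ratr (f (S w))) * (I S v - I S w) :> R.
Proof.
rewrite /I; case: (eqVneq (S v) alpha) => [->|nv]; case: (eqVneq (S w) alpha) => [->|nw] //=;
  rewrite ?subrr ?mulr0 ?mul0r ?subr0 ?sub0r //.
  by rewrite mulr1 subr_ge0 ler_rat Ha.
by rewrite mulrN1 oppr_ge0 subr_le0 ler_rat Ha.
Qed.

Lemma submart (S : st) :
  XX S <= \sum_(S' : st) trans R adj f S S' * XX S'.
Proof.
rewrite step_exp.
under eq_bigr do rewrite inner_eq mulrDr.
rewrite big_split /= -mulr_suml sum_p ?mul1r ?lerDl //.
set A := \sum_(v : V) \sum_(w : V) (adj v w)%:R * (ww v * ww w) * (ratr (f (S v)) * (I S v - I S w)).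
have eA : \sum_(v : V) ratr (f (S v)) / F S *
   \sum_(w in nbhd adj v) (deg v)%:R^-1 * ((I S v - I S w) * ww w) = (F S)^-1 * A.
  rewrite /A mulr_sumr; apply: eq_bigr => v _.
  rewrite !mulr_sumr big_mkcond /=; apply: eq_bigr => w _.
  rewrite inE; case: (boolP (adj v w)) => avw; last by rewrite !mul0r mulr0.
  by rewrite (ww_adj avw) /=; ring.
rewrite eA; apply: mulr_ge0; first by rewrite invr_ge0 ltW // F_gt0.
have eA2 : A = \sum_(v : V) \sum_(w : V) (adj w v)%:R * (ww w * ww v) *
   (ratr (f (S w)) * (I S w - I S v)).
  by rewrite /A exchange_big.
suff : 0 <= A + A by lra.
rewrite {2}eA2 /A -big_split sumr_ge0 // => v _.
rewrite -big_split sumr_ge0 // => w _ /=.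
rewrite (adj_sym w v).
have -> : (adj v w)%:R * (ww v * ww w) * (ratr (f (S v)) * (I S v - I S w)) +
    (adj v w)%:R * (ww w * ww v) * (ratr (f (S w)) * (I S w - I S v)) =
    ((adj v w)%:R * (ww v * ww w)) * ((ratr (f (S v)) - ratr (f (S w))) * (I S v - I S w)) by ring.
by rewrite mulr_ge0 ?pair_ge0 // mulr_ge0 ?ler0n // mulr_ge0 ?ww_ge0.
Qed.
Local Notation law := (law R adj f).
Local Notation trans := (trans R adj f).
Local Notation mo := (mono V alpha).

Definition present (S : st) := [exists v, S v == alpha].
Definition Mix (S : st) := present S && (S != mo).

Lemma upd_mono v w : upd mo v w = mo.
Proof. by apply/ffunP => x; rewrite !ffunE; case: ifP. Qed.

Lemma avg_const (S : st) v (c : R) :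
  (if deg v == 0%N then c else \sum_(w in nbhd adj v) (deg v)%:R^-1 * c) = c.
Proof.
case: ifP => // /negbT d0.
by rewrite sumr_const -(mulr_natr (_ * c)) mulrAC mulVf ?mul1r // pnatr_eq0.
Qed.

Lemma trans_mono : trans mo mo = 1.
Proof.
rewrite -(trans_sum1 mo) (bigD1 mo) //= big1 ?addr0 // => S' nS.
rewrite /Defs.trans big1 // => v _.
rewrite (negbTE nS) big1 ?if_same ?mulr0 // => w _.
by rewrite upd_mono (negbTE nS) mulr0.
Qed.

Lemma law_le1 (M0 : st) t S : law M0 t S <= 1.
Proof.
rewrite -(law_sum1 M0 t) (bigD1 S) //= lerDl sumr_ge0 // => *.
exact: law_ge0.
Qed.

Lemma law_mono_step (M0 : st) t : law M0 t mo <= law M0 t.+1 mo.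
Proof.
rewrite /= (bigD1 mo) //= trans_mono mulr1 lerDl sumr_ge0 // => S _.
by rewrite mulr_ge0 ?law_ge0 ?trans_ge0.
Qed.

Lemma law_mono_homo (M0 : st) : {homo (fun t => law M0 t mo) : n m / (n <= m)%N >-> n <= m}.
Proof. by apply/nondecreasing_seqP => n; exact: law_mono_step. Qed.

Lemma trans_pos (S : st) v w : adj v w -> 0 < trans S (upd S v w).
Proof.
move=> avw.
have wN : w \in nbhd adj v by rewrite inE.
have d0 : deg v != 0%N by rewrite -lt0n card_gt0; apply/set0Pn; exists w.
rewrite /Defs.trans (bigD1 v) //=.
set rest := \sum_(i | i != v) _.
have H2 : 0 <= rest.
  rewrite sumr_ge0 // => u _; rewrite mulr_ge0 ?p_ge0 //; case: ifP => _;
    [exact: ler0n| rewrite sumr_ge0 // => *; rewrite mulr_ge0 ?invr_ge0 ?ler0n //].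
apply: ltr_wpDr => //.
rewrite (negbTE d0); apply: mulr_gt0; first exact: divr_gt0 (ratr_f_gt0 _) (F_gt0 _).
rewrite (bigD1 w) //= eqxx.
apply: ltr_wpDr; first by rewrite sumr_ge0 // => *; rewrite mulr_ge0 ?invr_ge0 ?ler0n.
by rewrite mulr_gt0 ?invr_gt0 ?ltr0n ?lt0n.
Qed.

Lemma crossing (S : st) x p : path adj x p -> S x == alpha -> S (last x p) != alpha ->
  exists v w, [/\ adj v w, S v == alpha & S w != alpha].
Proof.
elim: p x => [|y p IH] x /=; first by move=> _ ->.
case/andP=> axy py Sx Sl.
case: (eqVneq (S y) alpha) => Sy; first by apply: (IH y py _ Sl); apply/eqP.
by exists x, y.
Qed.

Lemma pos_k k (S : st) : present S -> #|[set v | S v != alpha]| = k -> 0 < law S k mo.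
Proof.
elim: k S => [|k IH] S pS.
  move/cards0_eq => e0.
  have -> : S = mo.
    apply/ffunP => v; rewrite ffunE; apply/eqP/negPn/negP => nv.
    have : v \in [set v | S v != alpha] by rewrite inE nv.
    by rewrite e0 inE.
  by rewrite /= eqxx ltr01.
move=> ck.
case/existsP: pS => x Sx.
have : [set v | S v != alpha] != finset.set0 by rewrite -card_gt0 ck.
case/set0Pn => y; rewrite inE => Sy.
case/connectP: (adj_con x y) => p px ey.
have Sl : S (last x p) != alpha by rewrite -ey.
have [v [w [avw Sv Sw]]] := crossing px Sx Sl.
have vw : v != w by apply/eqP => evw; move: Sw; rewrite -evw Sv.
set S' := upd S v w.
have pS' : present S' by apply/existsP; exists v; rewrite /S' /upd ffunE (negbTE vw).
have cS' : #|[set u | S' u != alpha]| = k.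
  have -> : [set u | S' u != alpha] = [set u | S u != alpha] :\ w.
    apply/setP => u; rewrite !inE /S' /upd ffunE.
    by case: (eqVneq u w) => [->|] //=; rewrite Sv.
  by move: ck; rewrite (cardsD1 w) inE Sw add1n => -[].
have := IH S' pS' cS' => H.
rewrite -add1n CK (bigD1 S') // law1.
apply: ltr_wpDr; first by rewrite sumr_ge0 // => *; rewrite mulr_ge0 ?law_ge0 ?trans_ge0.
by rewrite mulr_gt0 // trans_pos.
Qed.


Definition Xmax : R := \sum_(v : V) ww v.

Lemma Xmax_gt0 : 0 < Xmax.
Proof.
rewrite /Xmax (bigD1 v0) //=; apply: ltr_wpDr; last exact: ww_gt0.
by rewrite sumr_ge0 // => *; exact: ww_ge0.
Qed.

Lemma present_split (S : st) : (present S)%:R = (S == mo)%:R + (Mix S)%:R :> R.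
Proof.
rewrite /Mix; case: (eqVneq S mo) => [->|nS] /=.
  have -> : present mo by apply/existsP; exists v0; rewrite ffunE.
  by rewrite addr0.
by rewrite add0r andbT.
Qed.

Lemma XX_le (S : st) : XX S <= Xmax * (present S)%:R.
Proof.
case pS: (present S).
  rewrite mulr1 /XX /Xmax ler_sum // => v _.
  by case: (S v == alpha); rewrite ?mul1r ?mul0r ?ww_ge0.
rewrite mulr0 /XX big1 // => v _.
case: (eqVneq (S v) alpha) => [Sv|]; last by rewrite mul0r.
by move/negbT: pS => /existsPn /(_ v); rewrite Sv eqxx.
Qed.

Definition Q (M0 : st) t : R := \sum_(S : st) law M0 t S * (Mix S)%:R.

Lemma E_ge (M0 : st) t : XX M0 <= \sum_(S : st) law M0 t S * XX S.
Proof.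
elim: t => [|t IH] /=; first by rewrite sum_indic.
rewrite law_exp; apply: le_trans IH _; apply: ler_sum => S _.
by apply: ler_wpM2l; [exact: law_ge0 | exact: submart].
Qed.

Lemma mQ (M0 : st) t : XX M0 <= Xmax * (law M0 t mo + Q M0 t).
Proof.
apply: le_trans (E_ge M0 t) _.
rewrite -(sum_indic' (law M0 t) mo) /Q -big_split mulr_sumr ler_sum // => S _.
rewrite /= -mulrDr -present_split mulrCA; apply: ler_wpM2l; first exact: law_ge0.
exact: XX_le.
Qed.

Definition n0 := #|V|.
Definition delta : R := \prod_(S : st | Mix S) law S n0 mo.

Lemma mix_pos (S : st) : Mix S -> 0 < law S n0 mo.
Proof.
case/andP => pS _.
have := pos_k pS (erefl _) => H.
apply: lt_le_trans H _; apply: law_mono_homo; exact: max_card.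
Qed.

Lemma delta_gt0 : 0 < delta.
Proof. by apply: prodr_gt0 => S; exact: mix_pos. Qed.

Lemma delta_le (S : st) : Mix S -> delta <= law S n0 mo.
Proof.
move=> mS; rewrite /delta (bigD1 S) //=; apply: ler_piMr; first exact: ltW (mix_pos mS).
by apply: prodr_ile1 => S' _; rewrite law_ge0 law_le1.
Qed.

Lemma gain (M0 : st) t : law M0 t mo + delta * Q M0 t <= law M0 (t + n0)%N mo.
Proof.
rewrite CK -(sum_indic' (law M0 t) mo) /Q mulr_sumr -big_split ler_sum // => S _.
rewrite /= mulrCA -mulrDr; apply: ler_wpM2l; first exact: law_ge0.
case: (eqVneq S mo) => [->|nS].
  rewrite /Mix eqxx andbF mulr0 addr0.
  have := law_mono_homo mo (leq0n n0); rewrite /= eqxx => H; exact: H.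
rewrite add0r; case mS: (Mix S); last by rewrite mulr0 law_ge0.
by rewrite mulr1 delta_le.
Qed.

Lemma accum (M0 : st) k : delta * \sum_(j < k) Q M0 (j * n0)%N <= law M0 (k * n0)%N mo.
Proof.
elim: k => [|k IH]; first by rewrite big_ord0 mulr0 law_ge0.
rewrite big_ord_recr /= mulrDr mulSn addnC.
apply: le_trans (gain M0 (k * n0)%N); by rewrite lerD2r.
Qed.

Lemma fix_ge (M0 : st) : XX M0 / Xmax <= fix_prob R adj f alpha M0.
Proof.
rewrite /fix_prob.
set m := fun t => law M0 t mo.
have hm : {homo m : n k / (n <= k)%N >-> n <= k} := law_mono_homo M0.
have cm : cvgn m.
  apply: nondecreasing_is_cvgn => //; exists 1 => _ [n _ <-]; exact: law_le1.
have mL t : m t <= limn m := nondecreasing_cvgn_le hm cm t.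
set c := XX M0 / Xmax.
have cQ t : c <= m t + Q M0 t by rewrite /c ler_pdivrMr ?Xmax_gt0 // mulrC; exact: mQ.
have Q_ge0 t : 0 <= Q M0 t by rewrite sumr_ge0 // => S _; rewrite mulr_ge0 ?law_ge0.
have key k : k%:R * (c - m (k * n0)%N) <= delta^-1.
  have -> : k%:R * (c - m (k * n0)%N) = \sum_(j < k) (c - m (k * n0)%N).
    by rewrite sumr_const card_ord mulr_natl.
  apply: le_trans (_ : \sum_(j < k) Q M0 (j * n0)%N <= _).
    apply: ler_sum => j _.
    have := cQ (j * n0)%N; have := hm (j * n0)%N (k * n0)%N (leq_mul (ltnW (ltn_ord j)) (leqnn n0)).
    lra.
  rewrite -[X in _ <= X]mul1r ler_pdivlMr ?delta_gt0 // mulrC.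
  apply: le_trans (accum M0 k) _; exact: law_le1.
rewrite leNgt; apply/negP => HL.
set e := c - limn m.
have e0 : 0 < e by rewrite /e subr_gt0.
set k := Num.Def.archi_bound (delta^-1 / e).
have hk : delta^-1 / e < k%:R.
  by apply: archi_boundP; rewrite divr_ge0 // ltW // ?invr_gt0 ?delta_gt0.
have := key k.
have : k%:R * e <= k%:R * (c - m (k * n0)%N).
  by apply: ler_wpM2l => //; rewrite /e lerD2l lerN2.
move: hk; rewrite ltr_pdivrMr // => hk.
have dk : 0 <= k%:R :> R by [].
lra.
Qed.

End Main.

Section Sym.
Variables (R : realType) (V : finType) (v0 : V) (k : nat) (i : nat).
Hypothesis ik : (i < k)%N.

Definition sw (a b x : V) : V := if x == a then b else if x == b then a else x.

Lemma swK a b : involutive (sw a b).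
Proof.
move=> x; rewrite /sw.
case: (eqVneq x a) => [->|xa].
  by case: (eqVneq b a) => [->|ba]; rewrite ?eqxx // (negbTE ba) eqxx.
case: (eqVneq x b) => [->|xb]; first by rewrite eqxx.
by rewrite (negbTE xa) (negbTE xb).
Qed.

Lemma sw_eq a b x : (sw a b x == b) = (x == a).
Proof.
rewrite /sw; case: (eqVneq x a) => [_|xa]; first by rewrite eqxx.
case: (eqVneq x b) => [xb|xb] //.
  by rewrite -xb eq_sym (negbTE xa).
by rewrite (negbTE xb).
Qed.

Lemma sw_eq2 a b x : (sw a b x == a) = (x == b).
Proof.
rewrite /sw; case: (eqVneq x a) => [xa|xa].
  by rewrite -xa eq_sym.
case: (eqVneq x b) => [xb|xb]; first by rewrite eqxx.
by rewrite (negbTE xa).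
Qed.

Definition cnt (v : V) : R := \sum_(u : k.-tuple V | uniq u) (nth v0 u i == v)%:R.

Lemma cnt_const a b : cnt a = cnt b.
Proof.
rewrite /cnt (reindex_inj (h := map_tuple (sw a b))); last first.
  by apply: (can_inj (g := map_tuple (sw a b))) => u; apply: val_inj; rewrite /= -map_comp map_id_in // => x _; rewrite /= swK.
apply: eq_big => u.
  by rewrite /= map_inj_uniq //; exact: (can_inj (swK a b)).
by move=> _; rewrite /= (nth_map v0) ?size_tuple // sw_eq2.
Qed.

Lemma sum_cnt : \sum_(v : V) cnt v = #|[set u : k.-tuple V | uniq u]|%:R.
Proof.
rewrite /cnt exchange_big /=.
rewrite (eq_bigr (fun _ => 1)); last first.
  move=> u _; rewrite (bigD1 (nth v0 u i)) //= eqxx big1 ?addr0 // => v /negbTE.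
  by rewrite eq_sym => ->.
rewrite sumr_const; congr (_ *+ _).
by apply: eq_card => u; rewrite inE.
Qed.

Lemma sym_sum (h : V -> R) :
  \sum_(u : k.-tuple V | uniq u) h (nth v0 u i) =
  #|[set u : k.-tuple V | uniq u]|%:R / #|V|%:R * \sum_(v : V) h v.
Proof.
have n0 : #|V|%:R != 0 :> R by rewrite pnatr_eq0 -lt0n; apply/card_gt0P; exists v0.
have ec : forall v, cnt v = #|[set u : k.-tuple V | uniq u]|%:R / #|V|%:R.
  move=> v; rewrite -sum_cnt (eq_bigr (fun _ => cnt v)) ?sumr_const; last by move=> *; exact: cnt_const.
  by rewrite cardT -cardE -(mulr_natr (cnt v)) mulfK.
rewrite mulr_sumr.
under [RHS]eq_bigr => v _ do rewrite -(ec v) /cnt mulr_suml.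
rewrite exchange_big /=; apply: eq_bigr => u _.
rewrite (bigD1 (nth v0 u i)) //= eqxx mul1r big1 ?addr0 // => v /negbTE.
by rewrite eq_sym => ->; rewrite mul0r.
Qed.
End Sym.

Unset Implicit Arguments.
Set Strict Implicit.
Set Printing Implicit Defensive.

Theorem corollary9 (R : realType) (V T : finType) (adj : rel V)
  (f : T -> rat) (alpha : T) (D : state V T -> R) :
  connected_graph adj ->
  (forall i : T, 1 <= f i) ->
  alpha \in fittest f ->
  good_init D ->
  (#|V|%:R)^-1 <= fix_prob_D adj f alpha D.
Proof.
move=> [asym [_ acon]] Hf aF [[D0 D1] [Du [HDu eD]]].
have Ha : forall j, f j <= f alpha by move: aF; rewrite inE => /forallP.
have kpos : (0 < #|T|)%N by apply/card_gt0P; exists alpha.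
set NU := #|[set u : #|T|.-tuple V | uniq u]|.
set NG := #|[set g : #|T|.-tuple T | uniq g]|.
have nz : (NU%:R * NG%:R : R) != 0.
  apply/negP => /eqP z.
  have : \sum_(S : state V T) D S = 0 by rewrite big1 // => S _; rewrite eD z invr0 mul0r.
  by rewrite D1 => /eqP; rewrite oner_eq0.
have [NU0 NG0] : NU%:R != 0 :> R /\ NG%:R != 0 :> R.
  by move: nz; rewrite mulf_eq0 negb_or => /andP.
have : (0 < NU)%N by rewrite lt0n -(pnatr_eq0 R).
case/card_gt0P => u0 _.
pose v0 := tnth u0 (Ordinal kpos).
have n0 : #|V|%:R != 0 :> R by rewrite pnatr_eq0 -lt0n; apply/card_gt0P; exists v0.
have fg := fix_ge R Hf v0 asym acon Ha.
rewrite /fix_prob_D.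
apply: le_trans (_ : _ <= \sum_(M0 : state V T) D M0 * (XX R adj alpha M0 / Xmax R adj)) _; last first.
  by apply: ler_sum => M0 _; apply: ler_wpM2l.
under eq_bigr do rewrite mulrA.
rewrite -mulr_suml ler_pdivlMr ?(Xmax_gt0 R adj v0) //.
set c := (NU%:R * NG%:R : R)^-1.
have -> : \sum_(S : state V T) D S * XX R adj alpha S =
   c * \sum_(u : #|T|.-tuple V | uniq u) \sum_(g : #|T|.-tuple T | uniq g)
        \sum_(S : state V T) Du u g S * XX R adj alpha S.
  under eq_bigr => S _ do rewrite eD -mulrA mulr_suml.
  rewrite -mulr_sumr; f_equal.
  rewrite exchange_big; apply: eq_bigr => u _.
  under eq_bigr => S _ do rewrite mulr_suml.
  by rewrite exchange_big.
have ag : forall g : #|T|.-tuple T, uniq g -> alpha \in g.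
  move=> g ug; apply/negPn/negP => nag.
  have : (size g <= size (enum (predC1 alpha)))%N.
    apply: uniq_leq_size => // x xg; rewrite mem_enum !inE.
    by apply/eqP => xa; move: nag; rewrite -xa xg.
  rewrite -cardE cardC1 size_tuple.
  by rewrite leqNgt ltn_predL kpos.
have ik : forall g : #|T|.-tuple T, uniq g -> (index alpha g < #|T|)%N.
  by move=> g ug; rewrite -{2}(size_tuple g) index_mem ag.
have per : forall (u : #|T|.-tuple V) (g : #|T|.-tuple T), uniq u -> uniq g ->
    ww R adj (nth v0 u (index alpha g)) <= \sum_(S : state V T) Du u g S * XX R adj alpha S.
  move=> u g uu ug.
  have [[Dd0 Dd1] Dz] := HDu u g uu ug.
  rewrite -[X in X <= _]mul1r -Dd1 mulr_suml; apply: ler_sum => S _.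
  case: (boolP (S \in states_with u g)) => Sin; last by rewrite Dz // !mul0r.
  apply: ler_wpM2l => //.
  have Sa : S (nth v0 u (index alpha g)) == alpha.
    move: Sin; rewrite inE => /forallP /(_ (Ordinal (ik g ug))).
    by rewrite (tnth_nth v0) (tnth_nth alpha) /= nth_index // ag.
  rewrite /XX (bigD1 (nth v0 u (index alpha g))) //= Sa mul1r lerDl.
  by rewrite sumr_ge0 // => v _; rewrite mulr_ge0 ?ww_ge0.
apply: le_trans (_ : _ <= c * \sum_(u : #|T|.-tuple V | uniq u) \sum_(g : #|T|.-tuple T | uniq g)
    ww R adj (nth v0 u (index alpha g))) _; last first.
  apply: ler_wpM2l; first by rewrite invr_ge0 mulr_ge0.
  by apply: ler_sum => u uu; apply: ler_sum => g ug; exact: per.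
rewrite exchange_big /=.
rewrite (eq_bigr (fun _ => NU%:R / #|V|%:R * Xmax R adj)); last first.
  by move=> g ug; rewrite (sym_sum v0 (ik g ug)).
rewrite sumr_const.
have -> : #|[pred g : #|T|.-tuple T | uniq g]| = NG by apply: eq_card => g; rewrite inE.
rewrite /c -(mulr_natr (NU%:R / #|V|%:R * Xmax R adj)); rewrite le_eqVlt; apply/orP; left; apply/eqP; field.
by rewrite NU0 NG0 n0.
Qed.
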